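(* Let $G^\sigma$ be a connected oriented unicyclic graph of even order $n$ with cycle $C_k^\sigma$. Then $S(G^\sigma)$ is nonsingular if and only if either $G^\sigma\in\mathscr{U}_1$ and $G^\sigma$ has a perfect matching, or $G^\sigma\in\mathscr{U}_2$, $C_k^\sigma$ is oddly-oriented and $G^\sigma-C_k^\sigma$ has a perfect matching.
   Context: An oriented graph $G^\sigma$ is a simple graph with an orientation of each edge. Its skew-adjacency matrix $S(G^\sigma)=(s_{ij})$ has $s_{ij}=1$ if there is an arc from $v_i$ to $v_j$, $s_{ij}=-1$ if there is an arc from $v_j$ to $v_i$, and $0$ otherwise. For an even cycle $u_1\cdots u_ku_1$, its sign is the sign of $\prod_{i=1}^k s_{u_iu_{i+1}}$ ($u_{k+1}=u_1$); it is oddly-oriented if this sign is negative. A $\delta$-transformation deletes a pendant vertex (degree one) together with its unique neighbor and all incident edges. With $k$ the girth, $\mathscr{U}_1$ is the set of oriented unicyclic graphs of order $n$ with girth $k$ that can be transformed into a graph without edges by finitely many $\delta$-transformations; $\mathscr{U}_2$ is the set of those that can be transformed into $C_k^\sigma$ or the disjoint union of $C_k^\sigma$ with isolated vertices by finitely many $\delta$-transformations. $G^\sigma-C_k^\sigma$ is obtained by deleting the cycle's vertices and incident edges. *)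

(* Defs.v *)
From mathcomp Require Import all_boot all_order all_algebra.
Set Implicit Arguments. Unset Strict Implicit. Unset Printing Implicit Defensive.
Import GRing.Theory Num.Theory.

Definition oriented_graph (n : nat) (arc : rel 'I_n) : Prop :=
  (forall x, ~~ arc x x) /\ (forall x y, arc x y -> ~~ arc y x).

Definition adj (n : nat) (arc : rel 'I_n) : rel 'I_n :=
  fun x y => arc x y || arc y x.

Definition skew_adj (n : nat) (arc : rel 'I_n) : 'M[rat]_n :=
  \matrix_(i, j) ((arc i j)%:R - (arc j i)%:R)%R.

Definition connected_graph (n : nat) (arc : rel 'I_n) : Prop :=
  forall x y : 'I_n, connect (adj arc) x y.

Definition edge_set (n : nat) (arc : rel 'I_n) : {set {set 'I_n}} :=
  [set e : {set 'I_n} | [exists x, exists y, (e == [set x; y]) && adj arc x y]].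

Definition unicyclic (n : nat) (arc : rel 'I_n) : Prop :=
  connected_graph arc /\ #|edge_set arc| = n.

Definition is_cycle (n : nat) (arc : rel 'I_n) (c : seq 'I_n) : Prop :=
  [/\ uniq c, 3 <= size c & cycle (adj arc) c].

Definition cycle_edge (n : nat) (c : seq 'I_n) (x y : 'I_n) : bool :=
  [&& x \in c, y \in c & (y == next c x) || (x == next c y)].

Definition oddly_oriented (n : nat) (arc : rel 'I_n) (c : seq 'I_n) : Prop :=
  ~~ odd (size c) /\ (\prod_(x <- c) skew_adj arc x (next c x) < 0)%R.

(* delta-transformation on the induced subgraph with vertex set A *)
Definition delta_step (n : nat) (arc : rel 'I_n) (A B : {set 'I_n}) : Prop :=
  exists v u : 'I_n,
    [/\ v \in A, u \in A, adj arc v u,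
        (forall w, w \in A -> adj arc v w -> w = u) &
        B = A :\ v :\ u].

Inductive delta_reach (n : nat) (arc : rel 'I_n) : {set 'I_n} -> {set 'I_n} -> Prop :=
  | delta_refl A : delta_reach arc A A
  | delta_next A B C : delta_step arc A B -> delta_reach arc B C -> delta_reach arc A C.

Definition no_edges (n : nat) (arc : rel 'I_n) (A : {set 'I_n}) : Prop :=
  forall x y, x \in A -> y \in A -> ~~ adj arc x y.

Definition in_U1 (n : nat) (arc : rel 'I_n) : Prop :=
  exists B, delta_reach arc [set: 'I_n] B /\ no_edges arc B.

(* U_2: can be transformed into C_k or C_k together with isolated vertices *)
Definition in_U2 (n : nat) (arc : rel 'I_n) (c : seq 'I_n) : Prop :=
  exists B, delta_reach arc [set: 'I_n] B /\
    {subset c <= B} /\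
    (forall x y, x \in B -> y \in B -> adj arc x y = cycle_edge c x y).

Definition has_perfect_matching (n : nat) (arc : rel 'I_n) (A : {set 'I_n}) : Prop :=
  exists M : {set {set 'I_n}},
    (forall e, e \in M -> exists x y, [/\ e = [set x; y], x \in A, y \in A & adj arc x y]) /\
    (forall x, x \in A -> exists! e, e \in M /\ x \in e).

(* Main.v *)
Require Import Defs.
From mathcomp Require Import all_boot all_order all_algebra.
From mathcomp Require fingroup perm zify.
From Stdlib Require Classical.
Import GRing.Theory Num.Theory.

Module Part1.
Import fingroup perm.
Set Implicit Arguments. Unset Strict Implicit. Unset Printing Implicit Defensive.
Import GRing.Theory Num.Theory.
Local Open Scope ring_scope.

Section Det.
Variable n : nat.
Variable arc : rel 'I_n.
Hypothesis Hor : oriented_graph arc.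

Definition Msub (A : {set 'I_n}) : 'M[rat]_n :=
  \matrix_(i, j) if (i \in A) && (j \in A) then skew_adj arc i j else (i == j)%:R.

Lemma adjC x y : adj arc x y = adj arc y x.
Proof. by rewrite /adj orbC. Qed.

Lemma adj_irr x : ~~ adj arc x x.
Proof. by rewrite /adj orbb; case: Hor. Qed.

Lemma skewE x y : skew_adj arc x y = (arc x y)%:R - (arc y x)%:R.
Proof. by rewrite /skew_adj mxE. Qed.

Lemma skewN x y : skew_adj arc y x = - skew_adj arc x y.
Proof. by rewrite !skewE opprB. Qed.

Lemma skew0 x y : ~~ adj arc x y -> skew_adj arc x y = 0.
Proof. by rewrite /adj negb_or skewE => /andP[/negbTE-> /negbTE->]; rewrite subrr. Qed.

Lemma skew_sq x y : adj arc x y -> skew_adj arc x y * skew_adj arc x y = 1.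
Proof.
case: Hor => _ H2; rewrite skewE /adj.
case Hxy: (arc x y) => /=.
  by rewrite (negbTE (H2 _ _ Hxy)) subr0 mulr1.
by move=> ->; rewrite sub0r mulrNN mulr1.
Qed.

Lemma skew_neq0 x y : adj arc x y -> skew_adj arc x y != 0.
Proof. by move=> /skew_sq H; apply/eqP=> E; move: H; rewrite E mul0r => /eqP; rewrite eq_sym oner_eq0. Qed.

Lemma MsubE (A : {set 'I_n}) i j : Msub A i j = if (i \in A) && (j \in A) then skew_adj arc i j else (i == j)%:R.
Proof. by rewrite mxE. Qed.

Lemma Msub_setT : Msub setT = skew_adj arc.
Proof. by apply/matrixP=> i j; rewrite MsubE !in_setT. Qed.

Lemma Msub_set0 : Msub set0 = 1%:M.
Proof. by apply/matrixP=> i j; rewrite !mxE !in_set0. Qed.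

Lemma det_zero_row (A : {set 'I_n}) x : x \in A -> (forall y, y \in A -> ~~ adj arc x y) -> \det (Msub A) = 0.
Proof.
move=> xA Hy; rewrite /determinant big1 // => s _.
rewrite (bigD1 x) //= MsubE xA /=.
case yA: (s x \in A) => /=.
  by rewrite skew0 ?Hy // mul0r mulr0.
case: eqP => [E|_]; first by rewrite -E xA in yA.
by rewrite mul0r mulr0.
Qed.

Lemma det_pendant (A : {set 'I_n}) v u : v \in A -> u \in A -> adj arc v u ->
  (forall w, w \in A -> adj arc v w -> w = u) ->
  \det (Msub A) = \det (Msub (A :\ v :\ u)).
Proof.
move=> vA uA avu Hw.
have uv : u != v by apply/eqP=> E; move: avu; rewrite E (negbTE (adj_irr v)).
have Hrow : forall j, j != u -> Msub A v j = 0.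
  move=> j ju; rewrite MsubE vA /=; case jA: (j \in A) => /=.
    rewrite skew0 //; apply/negP=> /(Hw _ jA) E; by rewrite E eqxx in ju.
  by case: eqP => // E; rewrite -E vA in jA.
have Hcol : forall i, i != u -> Msub A i v = 0.
  move=> i iu; rewrite MsubE vA andbT; case iA: (i \in A) => /=.
    rewrite skewN skew0 ?oppr0 //; apply/negP=> /(Hw _ iA) E; by rewrite E eqxx in iu.
  by case: eqP => // E; rewrite E vA in iA.
set t := tperm u v.
rewrite /determinant (reindex_inj (mulgI t)) /=; apply: eq_bigr => s _.
rewrite odd_permM odd_tperm uv /=.
have Hs : forall i, (t * s)%g i = s (t i) by move=> i; rewrite permM.
case su: (s u == u); last first.
  rewrite [X in _ = _ * X](bigD1 u) //= MsubE !in_setD1 eqxx /= [u == _]eq_sym su mul0r !mulr0.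
  by rewrite (bigD1 v) //= Hs /t tpermR Hrow ?mul0r ?mulr0 // su.
case sv: (s v == v); last first.
  rewrite [X in _ = _ * X](bigD1 v) //= MsubE !in_setD1 eqxx andbF /= [v == _]eq_sym sv mul0r !mulr0.
  pose i := t (s^-1 v)%g.
  rewrite (bigD1 i) //= Hs /i tpermK permKV Hcol ?mul0r ?mulr0 //.
  apply/eqP=> E; have : t (t (s^-1 v)%g) = t u by rewrite E.
  rewrite tpermK /t tpermL => E2; move/eqP: sv; apply; by rewrite -E2 permKV.
move/eqP: su => su; move/eqP: sv => sv.
rewrite (bigD1 u) // [X in _ = _ * X](bigD1 u) //= (bigD1 v) 1?eq_sym //=.
rewrite [X in _ = _ * (_ * X)](bigD1 v) 1?eq_sym //=.
rewrite !Hs /t tpermL tpermR sv su !MsubE uA vA /= !in_setD1 !eqxx /= !andbF /= !mul1r.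
rewrite mulrA (skewN u v) mulrN skew_sq; last by rewrite adjC.
rewrite mulN1r mulrN signrN mulNr opprK; congr (_ * _); apply: eq_bigr => i /andP[iu iv].
rewrite permM.
rewrite tpermD 1?eq_sym // !MsubE !in_setD1 iu iv /=.
have siu : s i != u by apply: contra iu => /eqP E; rewrite -su in E; rewrite (perm_inj E).
have siv : s i != v by apply: contra iv => /eqP E; rewrite -sv in E; rewrite (perm_inj E).
by rewrite siu siv.
Qed.

End Det.

Section Odd.
Variable n : nat.
Variable arc : rel 'I_n.

Lemma det_odd (A : {set 'I_n}) : odd #|A| -> \det (Msub arc A) = 0.
Proof.
move=> Ho.
set J := diag_mx (\row_i (if i \in A then -1 else 1) : 'rV[rat]_n).
have HJ : (Msub arc A)^T = J *m Msub arc A.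
  apply/matrixP=> i j; rewrite !mxE (bigD1 i) //= big1 ?addr0; last first.
    by move=> l li; rewrite !mxE eq_sym (negbTE li) mulr0n mul0r.
  rewrite !mxE eqxx mulr1n.
  case iA: (i \in A); case jA: (j \in A) => /=; rewrite ?mulN1r ?mul1r ?opprB ?[j == i]eq_sym //.
  have ij : i != j by apply/eqP=> E; rewrite E jA in iA.
  by rewrite (negbTE ij).
have dJ : \det J = -1.
  rewrite det_diag.
  rewrite (eq_bigr (fun i => if i \in A then -1 else 1)); last by move=> i _; rewrite mxE.
  by rewrite -big_mkcond /= prodr_const -signr_odd Ho expr1.
have := congr1 determinant HJ; rewrite det_tr det_mulmx dJ mulN1r => /eqP.
by rewrite -subr_eq0 opprK -mulr2n -mulr_natr mulf_eq0 pnatr_eq0 orbF => /eqP.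
Qed.

End Odd.

End Part1.
Import Part1.

Module Part2.
Import zify.
Set Implicit Arguments. Unset Strict Implicit. Unset Printing Implicit Defensive.
Import GRing.Theory Num.Theory.
Local Open Scope ring_scope.

Lemma modn_wrap (r k : nat) : (r < k)%N -> (k <= r + 2)%N -> (r + 2 < 2 * k)%N -> ((r + 2) %% k = r + 2 - k)%N.
Proof.
move=> H1 H2 H3.
have -> : (r + 2 = (r + 2 - k) + k)%N by lia.
rewrite modnDr modn_small //; lia.
Qed.

Section Cyc.
Variable k : nat.
Hypothesis k_gt0 : (0 < k)%N.
Hypothesis k_even : ~~ odd k.
Variable e : nat -> rat.
Hypothesis e_per : forall m, e (m + k)%N = e m.
Hypothesis e_sq : forall m, e m * e m = 1.

Lemma e_per_mod m : e m = e (m %% k)%N.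
Proof.
rewrite {1}(divn_eq m k); elim: (m %/ k)%N => [|q IH]; first by rewrite mul0n add0n.
by rewrite mulSn -addnA addnC e_per.
Qed.

Lemma prod_rot m : \prod_(i < k) e (m + i)%N = \prod_(i < k) e i.
Proof.
elim: m => [|m IH]; first by apply: eq_bigr => i _; rewrite add0n.
have H : \prod_(i < k.+1) e (m + i)%N = e m * \prod_(i < k) e (m.+1 + i)%N.
  by rewrite big_ord_recl addn0; congr (_ * _); apply: eq_bigr => i _; rewrite /bump /= addnS addSn.
rewrite big_ord_recr /= e_per IH mulrC in H.
have := congr1 (fun x => e m * x) H; rewrite !mulrA e_sq !mul1r => ->; done.
Qed.

Lemma prod_step m j : \prod_(i < j.+2) e (m + i)%N = (\prod_(i < j) e (m + i)%N) * e (m + j)%N * e (m + j.+1)%N.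
Proof. by rewrite !big_ord_recr. Qed.

Lemma kernel_trivial (P_neg : \prod_(i < k) e i = -1) (f : nat -> rat) :
  (forall m, f (m + k)%N = f m) ->
  (forall m, f m * e m = f (m + 2)%N * e m.+1) ->
  forall m, f m = 0.
Proof.
move=> f_per Hf m.
have Hf2 : forall m, f (m + 2)%N = f m * e m * e m.+1.
  by move=> m'; rewrite Hf -mulrA e_sq mulr1.
have Hit : forall j, f (m + j.*2)%N = f m * \prod_(i < j.*2) e (m + i)%N.
  elim=> [|j IH]; first by rewrite big_ord0 addn0 mulr1.
  rewrite doubleS prod_step -addn2 addnA Hf2 IH !mulrA; congr (_ * _ * _).
  by rewrite addnS.
have Hk : k = (k./2).*2 by rewrite -[LHS](odd_double_half k) (negbTE k_even) add0n.
have := Hit k./2; rewrite -Hk f_per prod_rot P_neg mulrN1 => /eqP.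
rewrite -subr_eq0 opprK -mulr2n -mulr_natr mulf_eq0 pnatr_eq0 orbF => /eqP //.
Qed.

Definition gker m := if ~~ odd (m %% k)%N then \prod_(i < (m %% k)%N) e i else 0.

Lemma gker0 : gker 0 = 1.
Proof. by rewrite /gker mod0n /= big_ord0. Qed.

Lemma gker_eq (P_pos : \prod_(i < k) e i = 1) m : gker m * e m = gker (m + 2)%N * e m.+1.
Proof.
have rk : (m %% k < k)%N by rewrite ltn_mod.
have E1 : e m = e (m %% k)%N by rewrite e_per_mod.
have E2 : e m.+1 = e (m %% k).+1 by rewrite e_per_mod [in RHS]e_per_mod -(addn1 m) -(addn1 (m %% k)%N) modnDml.
have E3 : ((m + 2) %% k = (m %% k + 2) %% k)%N by rewrite modnDml.
rewrite /gker E1 E2 E3; move: rk; set r := (m %% k)%N => rk.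
have k2 : (2 <= k)%N by case: k k_gt0 k_even => [|[|]].
case: (ltnP (r + 2) k) => Hr.
  rewrite modn_small // addn2 /= negbK.
  case: (odd r) => /=; first by rewrite !mul0r.
  by rewrite !big_ord_recr /= -!mulrA e_sq mulr1.
have : (r = k - 2 \/ r = k - 1)%N by lia.
case=> ->.
  rewrite modn_wrap; [|lia|lia|lia].
  have -> : (k - 2 + 2 - k = 0)%N by lia.
  rewrite /= big_ord0 mul1r.
  have -> : odd (k - 2) = odd k by rewrite oddB //= addbF.
  rewrite (negbTE k_even) /=.
  have Ek : k = (k - 2).+2 by lia.
  have := prod_step 0 (k - 2); rewrite -Ek P_pos => Hp; symmetry in Hp; move: Hp; rewrite !add0n => Hp.
  have := congr1 (fun x => x * e (k - 2).+1) Hp.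
  rewrite mul1r -mulrA e_sq mulr1 => ->; congr e; lia.
have -> : odd (k - 1) by rewrite oddB ?k2 //= addbT.
rewrite modn_wrap; [|lia|lia|lia].
have -> : (k - 1 + 2 - k = 1)%N by lia.
by rewrite /= !mul0r.
Qed.

End Cyc.

End Part2.
Import Part2.

Module Part3.
Import fingroup perm zify.
Set Implicit Arguments. Unset Strict Implicit. Unset Printing Implicit Defensive.
Import Order.TTheory GRing.Theory Num.Theory.
Local Open Scope ring_scope.

Section Seq.
Variable T : eqType.
Variable c : seq T.
Variable x0 : T.
Hypothesis Hu : uniq c.
Hypothesis Hs : (3 <= size c)%N.

Definition w m := nth x0 c (m %% size c)%N.

Lemma k_gt0 : (0 < size c)%N. Proof. by apply: leq_trans Hs. Qed.

Lemma w_in m : w m \in c.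
Proof. by rewrite /w mem_nth // ltn_mod k_gt0. Qed.

Lemma w_per m : w (m + size c)%N = w m.
Proof. by rewrite /w modnDr. Qed.

Lemma w_mod m : w (m %% size c)%N = w m.
Proof. by rewrite /w modn_mod. Qed.

Lemma index_w m : index (w m) c = (m %% size c)%N.
Proof. by rewrite /w index_uniq // ltn_mod k_gt0. Qed.

Lemma w_index x : x \in c -> w (index x c) = x.
Proof. by move=> xc; rewrite /w modn_small ?index_mem // nth_index. Qed.

Lemma next_w m : next c (w m) = w m.+1.
Proof.
rewrite next_nth w_in index_w.
have rk : (m %% size c < size c)%N by rewrite ltn_mod k_gt0.
have E2 : (m.+1 %% size c = (m %% size c).+1 %% size c)%N.
  by rewrite -(addn1 m) -(addn1 (m %% size c)%N) modnDml.
rewrite /w E2; move: rk; set r := (m %% size c)%N.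
case: c Hs => [//|y p] /= _ rk.
case: (ltnP r.+1 (size p).+1) => Hr.
  by rewrite modn_small //=; apply: set_nth_default.
have -> : r = size p by lia.
by rewrite modnn /= nth_default.
Qed.

Lemma prev_w m : prev c (w m.+1) = w m.
Proof. by rewrite -next_w prev_next. Qed.

Lemma w_inj i j : (i < size c)%N -> (j < size c)%N -> w i = w j -> i = j.
Proof.
move=> hi hj; rewrite /w !modn_small // => /eqP; rewrite nth_uniq //; by move/eqP.
Qed.

Lemma next_neq x : x \in c -> next c x != x.
Proof.
move=> xc; rewrite -(w_index xc) next_w; apply/eqP => E.
have := congr1 (fun y => index y c) E; rewrite !index_w.
have hi : (index x c < size c)%N by rewrite index_mem.
rewrite (modn_small hi).
case: (ltnP (index x c).+1 (size c)) => H; first by rewrite modn_small //; lia.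
have -> : (index x c).+1 = size c by lia.
rewrite modnn; lia.
Qed.

Lemma next_next_neq x : x \in c -> next c (next c x) != x.
Proof.
move=> xc; rewrite -(w_index xc) !next_w; apply/eqP => E.
have := congr1 (fun y => index y c) E; rewrite !index_w.
have hi : (index x c < size c)%N by rewrite index_mem.
rewrite (modn_small hi) -addn2.
case: (ltnP (index x c + 2) (size c)) => H; first by rewrite modn_small //; lia.
rewrite modn_wrap //; lia.
Qed.

Lemma next_prev_neq x : x \in c -> next c x != prev c x.
Proof.
move=> xc; apply/eqP=> E; have := next_next_neq xc.
by rewrite {1}E next_prev // eqxx.
Qed.

End Seq.

Section CycDet.
Variable n : nat.
Variable arc : rel 'I_n.
Hypothesis Hor : oriented_graph arc.
Variable c : seq 'I_n.
Variable x0 : 'I_n.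
Hypothesis Hu : uniq c.
Hypothesis Hs : (3 <= size c)%N.
Hypothesis Hcyc : forall x y, x \in c -> y \in c -> adj arc x y = cycle_edge c x y.

Local Notation S := (skew_adj arc).
Local Notation M := (Msub arc [set x in c]).

Lemma adj_next x : x \in c -> adj arc x (next c x).
Proof. by move=> xc; rewrite Hcyc ?mem_next // /cycle_edge xc mem_next xc eqxx. Qed.

Lemma ker_in (v : 'rV[rat]_n) j : j \in c ->
  (v *m M) 0 j = v 0 (prev c j) * S (prev c j) j + v 0 (next c j) * S (next c j) j.
Proof.
move=> jc; rewrite mxE (bigD1 (prev c j)) //= (bigD1 (next c j)) /=; last first.
  by rewrite next_prev_neq.
rewrite big1 ?addr0.
  by rewrite !MsubE !inE mem_prev mem_next jc.
move=> i /andP[ip inx]; rewrite MsubE inE; case ic: (i \in c) => /=.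
  rewrite inE jc skew0 ?mulr0 // Hcyc // /cycle_edge ic jc /=.
  apply/negP=> /orP[/eqP E|/eqP E].
    by move: ip; rewrite E prev_next // eqxx.
  by move: inx; rewrite E eqxx.
by case: eqP => [E|]; [rewrite E jc in ic | rewrite mulr0].
Qed.

Lemma ker_out (v : 'rV[rat]_n) j : j \notin c -> (v *m M) 0 j = v 0 j.
Proof.
move=> jc; rewrite mxE (bigD1 j) //= big1 ?addr0.
  by rewrite MsubE inE (negbTE jc) andbF eqxx mulr1.
move=> i ij; rewrite MsubE !inE (negbTE jc) andbF.
by rewrite (negbTE ij) mulr0.
Qed.

Definition ee m := S (w c x0 m) (w c x0 m.+1).

Lemma ee_per m : ee (m + size c)%N = ee m.
Proof. by rewrite /ee w_per // -addSn w_per. Qed.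

Lemma ee_sq m : ee m * ee m = 1.
Proof. by rewrite /ee skew_sq // -next_w // adj_next // w_in. Qed.

Lemma prod_ee : \prod_(x <- c) S x (next c x) = \prod_(i < size c) ee i.
Proof.
rewrite (big_nth x0) big_mkord; apply: eq_bigr => i _.
have -> : nth x0 c i = w c x0 i by rewrite /w modn_small.
by rewrite next_w.
Qed.

Hypothesis Hev : ~~ odd (size c).

Lemma cycle_det : \det M != 0 <-> \prod_(x <- c) S x (next c x) < 0.
Proof.
have k0 : (0 < size c)%N by apply: leq_trans Hs.
rewrite prod_ee.
have Psq : (\prod_(i < size c) ee i) * (\prod_(i < size c) ee i) = 1.
  by rewrite -big_split /=; apply: big1 => i _; rewrite ee_sq.
split.
- move=> Hdet; rewrite ltNge; apply/negP => Hp.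
  have P1 : \prod_(i < size c) ee i = 1.
    move: Psq Hp; set P := \prod_(i < size c) ee i => Psq Hp.
    have : (P - 1) * (P + 1) = 0 by rewrite mulrDr mulr1 mulrBl mul1r Psq addrA subrK subrr.
    move/eqP; rewrite mulf_eq0 => /orP[|/eqP E]; first by rewrite subr_eq0 => /eqP.
    have E2 : P = -1 by move/eqP: E; rewrite addr_eq0 => /eqP.
    by move: Hp; rewrite E2 ler0N1.
  move/negP: Hdet; apply; apply/det0P.
  pose g := gker (size c) ee.
  exists (\row_j (if j \in c then g (index j c) else 0)).
    apply/eqP=> /rowP /(_ (w c x0 0)); rewrite !mxE w_in // index_w // mod0n /g gker0 => /eqP.
    by rewrite oner_eq0.
  apply/rowP => j; rewrite [RHS]mxE.
  case jc: (j \in c); last by rewrite ker_out ?jc // mxE jc.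
  rewrite ker_in //.
  pose m := (index j c + (size c - 1))%N.
  have Ej : j = w c x0 m.+1.
    have -> : m.+1 = (index j c + size c)%N by rewrite /m; lia.
    by rewrite w_per // w_index.
  rewrite Ej prev_w // next_w // !mxE !w_in // !index_w // -!skewE (skewN arc (w c x0 m.+1) (w c x0 m.+2)).
  have gm : forall l, g (l %% size c)%N = g l by move=> l; rewrite /g /gker modn_mod.
  rewrite !gm mulrN.
  have := gker_eq k0 Hev ee_per ee_sq P1 m; rewrite /ee addn2 => ->.
  by rewrite subrr.
- move=> Hneg; apply/negP => /det0P [v vn0 vM].
  have P1 : \prod_(i < size c) ee i = -1.
    move: Psq Hneg; set P := \prod_(i < size c) ee i => Psq Hneg.
    have : (P - 1) * (P + 1) = 0 by rewrite mulrDr mulr1 mulrBl mul1r Psq addrA subrK subrr.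
    move/eqP; rewrite mulf_eq0 => /orP[|/eqP E]; last by move/eqP: E; rewrite addr_eq0 => /eqP.
    by rewrite subr_eq0 => /eqP E; move: Hneg; rewrite E ltr10.
  pose f m := v 0 (w c x0 m).
  have Hf : forall m, f m = 0.
    apply: (kernel_trivial Hev ee_per ee_sq P1).
      by move=> m; rewrite /f w_per.
    move=> m; have := congr1 (fun A : 'rV[rat]_n => A 0 (w c x0 m.+1)) vM.
    rewrite ker_in ?w_in // prev_w // next_w // [RHS]mxE (skewN arc (w c x0 m.+1) (w c x0 m.+2)) mulrN => /eqP.
    by rewrite subr_eq0 /f /ee addn2 => /eqP.
  move/eqP: vn0; apply; apply/rowP => j; rewrite mxE.
  case jc: (j \in c).
    by rewrite -(w_index x0 jc); apply: Hf.
  by have := congr1 (fun A : 'rV[rat]_n => A 0 j) vM; rewrite ker_out ?jc // mxE.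
Qed.

End CycDet.

End Part3.
Import Part3.

Module Part4.
Import zify.
Set Implicit Arguments. Unset Strict Implicit. Unset Printing Implicit Defensive.

Lemma set2_eq (T : finType) (a b x y : T) : a != b -> [set a; b] = [set x; y] ->
  (a = x /\ b = y) \/ (a = y /\ b = x).
Proof.
move=> ab E.
have : a \in [set x; y] by rewrite -E set21.
have : b \in [set x; y] by rewrite -E set22.
move=> /set2P Hb /set2P Ha; case: Ha => Ha; case: Hb => Hb; subst; rewrite ?eqxx in ab; by [left | right].


Qed.

Section Graph.
Variable n : nat.
Variable arc : rel 'I_n.
Hypothesis Hor : oriented_graph arc.
Hypothesis Huni : unicyclic arc.
Variable c : seq 'I_n.
Hypothesis Hcy : is_cycle arc c.

Lemma cu : uniq c. Proof. by case: Hcy. Qed.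
Lemma cs : (3 <= size c)%N. Proof. by case: Hcy. Qed.
Lemma cc : cycle (adj arc) c. Proof. by case: Hcy. Qed.

Fixpoint lev k : {set 'I_n} :=
  if k is k'.+1 then lev k' :|: [set x | [exists z, (z \in lev k') && adj arc x z]]
  else [set x in c].

Lemma lev_path p x : path (adj arc) x p -> last x p \in c -> x \in lev (size p).
Proof.
elim: p x => [|z p IH] x /=; first by rewrite inE.
move=> /andP[axz pz] lc; rewrite in_setU; apply/orP; right.
by rewrite inE; apply/existsP; exists z; rewrite IH.
Qed.

Lemma c_nonempty : exists y, y \in c.
Proof. by move: cs; case: c => [//|y p] _; exists y; rewrite mem_head. Qed.

Lemma lev_ex x : exists k, x \in lev k.
Proof.
case: c_nonempty => y yc.
case: Huni => Hcon _; have := Hcon x y => /connectP [p pp ly].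
by exists (size p); apply: lev_path => //; rewrite -ly.
Qed.

Definition dist x := ex_minn (lev_ex x).

Lemma dist_in x : x \in lev (dist x).
Proof. by rewrite /dist; case: ex_minnP. Qed.

Lemma dist_min x k : x \in lev k -> (dist x <= k)%N.
Proof. by rewrite /dist; case: ex_minnP => m _ H /H. Qed.

Lemma parent_ex x : x \notin c -> exists z, adj arc x z && (dist z < dist x)%N.
Proof.
move=> xc; have := dist_in x; have := @dist_min x.
case E: (dist x) => [|k] Hm; first by rewrite /= inE (negbTE xc).
rewrite /= in_setU => /orP[H|]; first by have := Hm _ H; rewrite ltnn.
rewrite inE => /existsP [z /andP [zk axz]]; exists z; rewrite axz /=.
by rewrite ltnS dist_min.
Qed.

Definition par x := odflt x [pick z | adj arc x z && (dist z < dist x)%N].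

Lemma par_spec x : x \notin c -> adj arc x (par x) /\ (dist (par x) < dist x)%N.
Proof.
move=> xc; rewrite /par; case: pickP => [z /andP[]//|H].
by case: (parent_ex xc) => z; rewrite H.
Qed.

Definition F x := if x \in c then [set x; next c x] else [set x; par x].

Lemma edge_in a b : adj arc a b -> [set a; b] \in edge_set arc.
Proof. by move=> ab; rewrite inE; apply/existsP; exists a; apply/existsP; exists b; rewrite eqxx. Qed.

Lemma F_edge x : F x \in edge_set arc.
Proof.
rewrite /F; case: ifP => xc; apply: edge_in.
  exact: next_cycle cc xc.
by case: (par_spec (negbT xc)).
Qed.

Lemma F_inj : injective F.
Proof.
move=> x y; rewrite /F.
case xc: (x \in c); case yc: (y \in c) => E.
- have nx : x != next c x by rewrite eq_sym (next_neq x cu cs xc).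
  have [[]//|[E1 E2]] := set2_eq nx E.
  have := next_next_neq x cu cs yc; by rewrite -E1 E2 eqxx.
- have : y \in [set x; next c x] by rewrite E set21.
  by case/set2P => Ee; move: yc; rewrite Ee ?mem_next xc.
- have : x \in [set y; next c y] by rewrite -E set21.
  by case/set2P => Ee; move: xc; rewrite Ee ?mem_next yc.
- have [ax _] := par_spec (negbT xc); have [ay _] := par_spec (negbT yc).
  have xpx : x != par x by apply: contraTneq ax => <-; apply: adj_irr.
  have [[]//|[E1 E2]] := set2_eq xpx E.
  have [_ h1] := par_spec (negbT xc); have [_ h2] := par_spec (negbT yc).
  by move: h1 h2; rewrite -E1 E2; lia.
Qed.

Lemma F_onto : [set F x | x in setT] = edge_set arc.
Proof.
apply/eqP; rewrite eqEcard; apply/andP; split.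
  by apply/subsetP => e /imsetP [x _ ->]; apply: F_edge.
by rewrite card_imset; [case: Huni => _ ->; rewrite cardsT card_ord | apply: F_inj].
Qed.

Lemma edge_cases a b : adj arc a b ->
  [\/ (a \in c) && (b == next c a), (b \in c) && (a == next c b),
      (a \notin c) && (b == par a) | (b \notin c) && (a == par b)].
Proof.
move=> ab; have := edge_in ab; rewrite -F_onto => /imsetP [x _].
have anb : a != b by apply: contraTneq ab => ->; apply: adj_irr.
rewrite /F; case xc: (x \in c) => /(set2_eq anb) [[-> ->]|[-> ->]].
- by apply: Or41; rewrite xc eqxx.
- by apply: Or42; rewrite xc eqxx.
- by apply: Or43; rewrite xc eqxx.
- by apply: Or44; rewrite xc eqxx.
Qed.

Lemma adj_on_c x y : x \in c -> y \in c -> adj arc x y = cycle_edge c x y.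
Proof.
move=> xc yc; rewrite /cycle_edge xc yc /=; apply/idP/idP.
  case/edge_cases => /andP [h1 h2].
  - by rewrite h2.
  - by rewrite h2 orbT.
  - by rewrite xc in h1.
  - by rewrite yc in h1.
case/orP => /eqP ->; first exact: next_cycle cc xc.
by rewrite adjC; apply: next_cycle cc yc.
Qed.

Lemma terminal_is_cycle (B : {set 'I_n}) x0 : x0 \in B ->
  (forall x, x \in B -> exists w1 w2, [/\ w1 \in B, w2 \in B, w1 != w2, adj arc x w1 & adj arc x w2]) ->
  B = [set x in c].
Proof.
move=> x0B H2.
have BC : {subset B <= c}.
  move=> x xB; apply/negPn/negP => xc.
  pose D := B :\: [set x in c].
  have xD : x \in D by rewrite !inE xB xc.
  case: (@arg_maxnP _ x (mem D) dist xD) => y yD Hmax. move: yD; rewrite !inE => /andP [yc yB].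
  have [w1 [w2 [w1B w2B w12 a1 a2]]] := H2 y yB.
  have Hw : forall w, w \in B -> adj arc y w -> w = par y.
    move=> w wB a; case/edge_cases: a => /andP [h1 h2].
    - by rewrite h1 in yc.
    - by move: yc; rewrite (eqP h2) mem_next h1.
    - exact/eqP.
    - have := Hmax w; rewrite !inE h1 wB => /(_ isT).
      have [_ ] := par_spec h1; rewrite -(eqP h2); lia.
  by move: w12; rewrite (Hw _ w1B a1) (Hw _ w2B a2) eqxx.
have Hnext : forall x, x \in B -> next c x \in B.
  move=> x xB; have xc := BC x xB.
  have [w1 [w2 [w1B w2B w12 a1 a2]]] := H2 x xB.
  have Hw : forall w, w \in B -> adj arc x w -> (w == next c x) || (x == next c w).
    move=> w wB a; case/edge_cases: a => /andP [h1 h2].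
    - by rewrite h2.
    - by rewrite h2 orbT.
    - by rewrite xc in h1.
    - by rewrite (BC w wB) in h1.
  case/orP: (Hw _ w1B a1) => [/eqP <- //|/eqP E1].
  case/orP: (Hw _ w2B a2) => [/eqP <- //|/eqP E2].
  by move: w12; rewrite -(prev_next cu w1) -E1 -(prev_next cu w2) -E2 eqxx.
have x0c := BC x0 x0B.
have Hit : forall j, w c x0 (index x0 c + j) \in B.
  elim=> [|j IH]; first by rewrite addn0 w_index.
  by rewrite addnS -next_w ?cu ?cs // Hnext.
apply/setP => y; rewrite inE; apply/idP/idP; first exact: BC.
move=> yc; rewrite -(w_index x0 yc) -(w_per c x0).
have hi : (index x0 c < size c)%N by rewrite index_mem.
have -> : (index y c + size c = index x0 c + (index y c + size c - index x0 c))%N by lia.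
exact: Hit.
Qed.

End Graph.

End Part4.
Import Part4.

Module Part5.
Import Classical.
Set Implicit Arguments. Unset Strict Implicit. Unset Printing Implicit Defensive.
Import Order.TTheory GRing.Theory Num.Theory.
Local Open Scope ring_scope.

Section Main.
Variable n : nat.
Variable arc : rel 'I_n.
Hypothesis Hor : oriented_graph arc.

Lemma delta_sub A B : delta_reach arc A B -> B \subset A.
Proof.
elim=> [A'|A1 B1 C1 [v [u [_ _ _ _ ->]]] _ H]; first exact: subxx.
by apply: (subset_trans H); apply: subset_trans (subsetDl _ _) (subsetDl _ _).
Qed.

Lemma delta_det A B : delta_reach arc A B -> \det (Msub arc A) = \det (Msub arc B).
Proof.
elim=> // A1 B1 C1 [v [u [vA uA avu Hw ->]]] _ <-.
exact: det_pendant.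
Qed.

Lemma pm_empty : has_perfect_matching arc set0.
Proof. by exists set0; split=> [e|x]; rewrite inE. Qed.

Lemma pm_add Y Z v u : has_perfect_matching arc Y -> v \notin Y -> u \notin Y ->
  adj arc v u -> Z = v |: (u |: Y) -> has_perfect_matching arc Z.
Proof.
move=> [M [HM1 HM2]] vY uY avu ->.
have vu : v != u by apply: contraTneq avu => ->; apply: adj_irr.
exists ([set v; u] |: M); split.
  move=> e; rewrite in_setU1 => /orP [/eqP ->|eM].
    by exists v, u; rewrite !inE !eqxx /= orbT.
  have [x [y [-> xY yY axy]]] := HM1 e eM.
  by exists x, y; rewrite !inE xY yY !orbT.
have eY : forall e x, e \in M -> x \in e -> x \in Y.
  move=> e x eM; have [a [b [-> aY bY _]]] := HM1 e eM.
  by case/set2P => ->.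
move=> x; rewrite !inE => /orP [/eqP ->|/orP [/eqP ->|xY]].
- exists [set v; u]; split; first by rewrite !setU11.
  move=> e []; rewrite in_setU1 => /orP [/eqP -> //|eM ve].
  by rewrite (eY _ _ eM ve) in vY.
- exists [set v; u]; split; first by rewrite setU11 set22.
  move=> e []; rewrite in_setU1 => /orP [/eqP -> //|eM ve].
  by rewrite (eY _ _ eM ve) in uY.
- have [e [[eM xe] He]] := HM2 x xY.
  exists e; split; first by rewrite in_setU1 eM orbT.
  move=> e' []; rewrite in_setU1 => /orP [/eqP ->|e'M xe'].
    case/set2P => E; [by rewrite -E xY in vY | by rewrite -E xY in uY].
  exact: He.
Qed.

Lemma pm_del Y v u : has_perfect_matching arc Y -> v \in Y ->
  (forall w, w \in Y -> adj arc v w -> w = u) -> has_perfect_matching arc (Y :\ v :\ u).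
Proof.
move=> [M [HM1 HM2]] vY Hw.
have uq : forall x e e', x \in Y -> e \in M -> x \in e -> e' \in M -> x \in e' -> e = e'.
  move=> x e e' xY eM xe e'M xe'; have [f [_ Hf]] := HM2 x xY.
  by rewrite -(Hf e) ?(Hf e').
have [e0 [[e0M ve0] _]] := HM2 v vY.
have [uY E0] : u \in Y /\ e0 = [set v; u].
  have [a [b [Ee aY bY ab]]] := HM1 e0 e0M.
  move: ve0; rewrite Ee => /set2P [Ea|Eb].
    have Hb : b = u by apply: Hw; rewrite // Ea.
    by rewrite -Hb -Ea; split.
  have Ha : a = u by apply: Hw; rewrite // Eb adjC.
  by rewrite -Ha -Eb setUC; split.
have notin : forall e x, e \in M -> e != e0 -> x \in e -> (x != v) && (x != u).
  move=> e x eM ee0 xe; apply/andP; split; apply/eqP => Ex; move/eqP: ee0; apply.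
    by apply: (uq v) => //; rewrite -Ex.
  by apply: (uq u) => //; rewrite ?E0 ?set22 // -Ex.
exists (M :\ e0); split.
  move=> e; rewrite in_setD1 => /andP [ee0 eM].
  have [a [b [Ee aY bY ab]]] := HM1 e eM.
  exists a, b; split => //; rewrite !in_setD1 ?aY ?bY andbT andbC.
    by apply: notin ee0 _; rewrite // Ee set21.
  by apply: notin ee0 _; rewrite // Ee set22.
move=> x; rewrite !in_setD1 => /and3P [xu xv xY].
have [e [[eM xe] He]] := HM2 x xY.
have ee0 : e != e0.
  by apply/eqP => E; move: xe; rewrite E E0 => /set2P [] /eqP; rewrite ?(negbTE xu) ?(negbTE xv).
exists e; split; first by rewrite in_setD1 ee0.
by move=> e' []; rewrite in_setD1 => /andP [_ e'M] xe'; apply: He.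
Qed.

End Main.

Section Main2.
Variable n : nat.
Variable arc : rel 'I_n.
Hypothesis Hor : oriented_graph arc.

Lemma delta_step_card A B : delta_step arc A B -> (#|B| < #|A|)%N.
Proof.
move=> [v [u [vA _ _ _ ->]]].
apply: (leq_ltn_trans (subset_leq_card (subsetDl _ _))).
by rewrite (cardsD1 v A) vA.
Qed.

Lemma terminal_ex A : exists B, delta_reach arc A B /\ ~ (exists B', delta_step arc B B').
Proof.
move: {-1}#|A| (leqnn #|A|) => k; elim: k A => [|k IH] A HA.
  exists A; split; first exact: delta_refl.
  by move=> [B' /delta_step_card]; rewrite ltnNge (leq_trans HA).
case: (classic (exists B', delta_step arc A B')) => [[B' HB']|Hno]; last first.
  by exists A; split => //; apply: delta_refl.
have := delta_step_card HB' => Hc.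
have HBk : (#|B'| <= k)%N by rewrite -ltnS (leq_trans Hc HA).
have [B [HB Ht]] := IH B' HBk.
by exists B; split => //; apply: delta_next HB' HB.
Qed.

Lemma pm_back A B (X : {set 'I_n}) : delta_reach arc A B -> X \subset B ->
  has_perfect_matching arc (B :\: X) -> has_perfect_matching arc (A :\: X).
Proof.
elim=> // A1 B1 C1 Hs Hr IH XC Hpm.
have := IH XC Hpm; case: Hs => v [u [vA uA avu _ EB]] HB.
have XB1 := subset_trans XC (delta_sub Hr).
have vX : v \notin X by apply/negP=> /(subsetP XB1); rewrite EB !inE eqxx andbF.
have uX : u \notin X by apply/negP=> /(subsetP XB1); rewrite EB !inE eqxx.
apply: (pm_add Hor HB _ _ avu); rewrite ?EB ?inE ?eqxx ?andbF //.
apply/setP => x; rewrite !inE.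
case: (x =P v) => [->|_]; first by rewrite vA (negbTE vX).
by case: (x =P u) => [->|_]; first by rewrite uA (negbTE uX).
Qed.

End Main2.

End Part5.
Import Part5.

Import Classical.

Theorem theorem5p2 (n : nat) (arc : rel 'I_n) (c : seq 'I_n) :
  oriented_graph arc -> unicyclic arc -> ~~ odd n -> is_cycle arc c ->
  ((\det (skew_adj arc) != 0)%R <->
     (in_U1 arc /\ has_perfect_matching arc [set: 'I_n]) \/
     [/\ in_U2 arc c, oddly_oriented arc c &
         has_perfect_matching arc (~: [set x in c])]).
Proof.
move=> Hor Huni _ Hcy.
have Hu := cu Hcy; have Hs := cs Hcy.
have [x0 x0c] := c_nonempty Hcy.
set C := [set x in c].
have cardC : #|C| = size c by rewrite cardsE; apply/card_uniqP.
split.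
- move=> Hdet.
  have [B [HB Ht]] := terminal_ex arc [set: 'I_n].
  have HdB : (\det (Msub arc B) != 0)%R by rewrite -(delta_det Hor HB) Msub_setT.
  case: (set_0Vmem B) => [B0|[y0 y0B]].
    left; split.
      by exists B; split => // x y; rewrite B0 inE.
    have := pm_back Hor HB (sub0set B); rewrite !setD0; apply.
    by rewrite B0; apply: pm_empty.
  have H2 : forall x, x \in B -> exists w1 w2,
      [/\ w1 \in B, w2 \in B, w1 != w2, adj arc x w1 & adj arc x w2].
    move=> x xB.
    case: (pickP (fun y => (y \in B) && adj arc x y)) => [u /andP [uB axu] | Hn]; last first.
      move: HdB; rewrite (det_zero_row xB) ?eqxx // => y yB.
      by have := Hn y; rewrite yB /= => ->.
    case: (pickP (fun w => [&& w \in B, adj arc x w & w != u])) => [w /and3P [wB axw wu] | Hn].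
      by exists u, w; split => //; rewrite eq_sym.
    exfalso; apply: Ht; exists (B :\ x :\ u); exists x, u; split => // w wB axw.
    by apply/eqP; have := Hn w; rewrite wB axw /= => /negbFE.
  have BC : B = C := terminal_is_cycle Hor Huni Hcy y0B H2.
  have Hcyc : forall x y, x \in c -> y \in c -> adj arc x y = cycle_edge c x y.
    by move=> x y xc yc; apply: adj_on_c.
  have Hev : ~~ odd (size c).
    apply/negP => Hodd; move: HdB; by rewrite BC det_odd ?eqxx // cardC.
  right; split.
  + exists B; split => //; split; first by move=> x xc; rewrite BC inE.
    by move=> x y; rewrite BC !inE; apply: Hcyc.
  + split => //; apply/(cycle_det Hor x0 Hu Hs Hcyc Hev).
    by move: HdB; rewrite BC.
  + rewrite -setTD; apply: (pm_back Hor HB (X:=C)); first by rewrite BC.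
    by rewrite BC setDv; apply: pm_empty.
- case => [[[B [HB Hne]] Hpm] | [[B [HB [cB Hadj]]] [Hev Hneg] Hpm]].
  + rewrite -Msub_setT.
    move: Hne Hpm; elim: HB => [A0|A1 B1 C1 [v [u [vA uA avu Hw EB]]] Hr IH] Hne Hpm.
      case: (set_0Vmem A0) => [->|[x xA]]; first by rewrite Msub_set0 det1 oner_eq0.
      case: Hpm => M [HM1 HM2]; have [e [[eM _] _]] := HM2 x xA.
      have [a [b [_ aA bA ab]]] := HM1 e eM.
      by have := Hne a b aA bA; rewrite ab.
    rewrite (det_pendant Hor vA uA avu Hw) -EB; apply: IH => //.
    by rewrite EB; apply: pm_del.
  + rewrite -Msub_setT; rewrite -setTD in Hpm.
    move: cB Hadj Hpm; elim: HB => [A0|A1 B1 C1 [v [u [vA uA avu Hw EB]]] Hr IH] cB Hadj Hpm.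
      have A0C : A0 = C.
        apply/setP => x; rewrite inE; apply/idP/idP; last by move/cB.
        move=> xA; apply/negPn/negP => xc.
        case: Hpm => M [HM1 HM2]; have xAC : x \in A0 :\: C by rewrite !inE xc.
        have [e [[eM _] _]] := HM2 x xAC.
        have [a [b [_ aA bA ab]]] := HM1 e eM.
        move: aA bA; rewrite !inE => /andP [ac aA] /andP [_ bA].
        by move: ab; rewrite Hadj // /cycle_edge (negbTE ac).
      have Hcyc : forall x y, x \in c -> y \in c -> adj arc x y = cycle_edge c x y.
        by move=> x y xc yc; apply: Hadj; apply: cB.
      by rewrite A0C; apply/(cycle_det Hor x0 Hu Hs Hcyc Hev).
    have cB1 : {subset c <= B1} by move=> x /cB xC; apply: (subsetP (delta_sub Hr)).
    have vc : v \notin c by apply/negP => /cB1; rewrite EB !inE eqxx andbF.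
    rewrite (det_pendant Hor vA uA avu Hw) -EB; apply: IH => //.
    have -> : B1 :\: C = A1 :\: C :\ v :\ u.
      by apply/setP => x; rewrite EB !inE; case: (x \in c); rewrite ?andbF.
    apply: pm_del Hpm _ _; first by rewrite !inE vc.
    by move=> w; rewrite inE => /andP [_ wA]; apply: Hw.
Qed.
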